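(* Let $(M,g)$ be a $d$-dimensional Lorentzian manifold with $d>5$, $p\in M$, and $\{\ell,n,m^3,\dots,m^d\}$ a null frame at $p$. Suppose the Weyl tensor $C$ at $p$ is invariant under the subgroup of the Lorentz group that fixes $\ell$, $n$ and $m^3$ and acts as $SO(d-3)$, in its standard representation, on $\mathrm{span}\{m^4,\dots,m^d\}$. Let $\kappa=\mathrm{diag}(d-3,-1,-1,\dots,-1)$ be the $(d-2)\times(d-2)$ diagonal matrix (indexed by $3,\dots,d$). Then in this frame there are real numbers $\check\lambda_1,\hat\lambda_1,\check v,\hat v,s,\bar R$ such that $\check H=\check\lambda_1\kappa$, $\check T=0$, $\check v^i=\delta^i_3\check v$; $A_{ij}=0$, $\bar S=s\kappa$, $\bar C_{ijkl}=0$ (with $\bar R$ arbitrary); $\hat H=\hat\lambda_1\kappa$, $\hat T=0$, $\hat v^i=\delta^i_3\hat v$.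
   Context: Null frame convention: $g=2\,\ell\, n+\delta_{ij}m^im^j$, i.e. $g(\ell,n)=1$, $g(m^i,m^j)=\delta_{ij}$, all other products zero. Frame indices: $0$ refers to $\ell$, $1$ to $n$, $i,j,k,l\in\{3,\dots,d\}$ to the $m^i$; let $N=d-2$. $C_{abcd}$ are the frame components of the Weyl tensor. Definitions: $\hat H_{ij}=C_{0i0j}$, $\check H_{ij}=C_{1i1j}$ (symmetric, traceless matrices); $A_{ij}=C_{01ij}$; $\bar R_{ij}=\sum_k C_{kikj}$, $\bar R=\sum_i\bar R_{ii}$, $\bar S_{ij}=\bar R_{ij}-\frac1N\bar R\delta_{ij}$; $\bar C_{ijkl}$ is the Weyl (totally trace-free) part of the algebraic curvature tensor $C_{ijkl}$ on $\mathbb R^N$. The tensor $C_{1ijk}$ (antisymmetric in $j,k$) decomposes uniquely as $C_{1ijk}=\delta_{ij}\check v_k-\delta_{ik}\check v_j+\check T_{ijk}$ with $\sum_i\check T_{iji}=0$ and $\check T_{(ijk)}=0$ (so $\check v_k=\frac{1}{N-1}\sum_i C_{1iik}$); likewise $C_{0ijk}=\delta_{ij}\hat v_k-\delta_{ik}\hat v_j+\hat T_{ijk}$ with $\hat T$ of the same type. *)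

(* Defs.v *)
From HB Require Import structures.
From mathcomp Require Import all_boot all_order all_algebra.
From mathcomp Require Import reals.
Set Implicit Arguments.
Unset Strict Implicit.
Unset Printing Implicit Defensive.
Import Order.TTheory GRing.Theory Num.Theory.
Local Open Scope ring_scope.

(* Frame indices: 'I_d.  Index 0 <-> l, index 1 <-> n, index 2 <-> m^3, and
   index a (2 <= a < d) <-> m^(a+1).  So paper index i in {3..d} is a = i-1. *)

Section Defs.
Variables (R : realType) (d : nat).

Definition frame_tensor := 'I_d -> 'I_d -> 'I_d -> 'I_d -> R.

(* g(l,n)=1, g(m^i,m^j)=delta_ij, others 0.  This matrix is its own inverse. *)
Definition eta (a b : 'I_d) : R :=
  if ((val a == 0%N) && (val b == 1%N)) || ((val a == 1%N) && (val b == 0%N)) then 1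
  else if (a == b) && (2 <= val a)%N then 1 else 0.

Definition is_weyl (C : frame_tensor) : Prop :=
  [/\ (forall a b c e, C a b c e = - C b a c e),
      (forall a b c e, C a b c e = C c e a b),
      (forall a b c e, C a b c e + C a c e b + C a e b c = 0)
    & (forall b e, \sum_(a < d) \sum_(c < d) eta a c * C a b c e = 0)].

Definition in_stab_SO (L : 'M[R]_d) : Prop :=
  [/\ (forall a b : 'I_d, ((val a < 3)%N || (val b < 3)%N) -> L a b = (a == b)%:R),
      L^T *m L = 1%:M
    & \det L = 1].

Definition invariant_under (L : 'M[R]_d) (C : frame_tensor) : Prop :=
  forall a b c e,
    C a b c e =
    \sum_(a' < d) \sum_(b' < d) \sum_(c' < d) \sum_(e' < d)
      L a' a * L b' b * L c' c * L e' e * C a' b' c' e'.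

Definition spatial (i : 'I_d) : bool := (2 <= val i)%N.

Definition kron (i j : 'I_d) : R := (i == j)%:R.

Definition Nr : R := d%:R - 2.

Definition kappa (i j : 'I_d) : R :=
  kron i j * (if val i == 2%N then d%:R - 3 else -1).

(* H_{ij} = C_{a i a j}: a = l gives \hat H, a = n gives \check H *)
Definition Hcomp (C : frame_tensor) (a i j : 'I_d) : R := C a i a j.

Definition vcomp (C : frame_tensor) (a k : 'I_d) : R :=
  (Nr - 1)^-1 * \sum_(i < d | spatial i) C a i i k.

Definition Tcomp (C : frame_tensor) (a i j k : 'I_d) : R :=
  C a i j k - kron i j * vcomp C a k + kron i k * vcomp C a j.

Definition Rbar_ij (C : frame_tensor) (i j : 'I_d) : R :=
  \sum_(k < d | spatial k) C k i k j.

Definition Rbar (C : frame_tensor) : R :=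
  \sum_(i < d | spatial i) Rbar_ij C i i.

Definition Sbar (C : frame_tensor) (i j : 'I_d) : R :=
  Rbar_ij C i j - Nr^-1 * Rbar C * kron i j.

(* Weyl (totally trace-free) part of C_{ijkl} on R^N *)
Definition Cbar (C : frame_tensor) (i j k l : 'I_d) : R :=
  C i j k l
  - (Nr - 2)^-1 * (kron i k * Rbar_ij C j l - kron i l * Rbar_ij C j k
                   - kron j k * Rbar_ij C i l + kron j l * Rbar_ij C i k)
  + Rbar C / ((Nr - 1) * (Nr - 2)) * (kron i k * kron j l - kron i l * kron j k).

End Defs.

Arguments eta {R d}.
Arguments kron {R d}.
Arguments kappa {R d}.
Arguments Nr {R}.
Arguments spatial {d}.
Arguments is_weyl {R d}.
Arguments in_stab_SO {R d}.
Arguments invariant_under {R d}.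

Definition fidx (d : nat) (hd : (5 < d)%N) (m : nat) : 'I_d :=
  insubd (Ordinal (ltn_trans (isT : (0 < 5)%N) hd)) m.

(* Main.v *)
Require Import Defs.
From HB Require Import structures.
From mathcomp Require Import all_boot all_order all_algebra all_fingroup.
From mathcomp Require Import reals ring lra.
Import Order.TTheory GRing.Theory Num.Theory.
Local Open Scope ring_scope.
Set Implicit Arguments.
Unset Strict Implicit.
Unset Printing Implicit Defensive.


Lemma sum_single (R : realType) (d : nat) (y : 'I_d) (F : 'I_d -> R) :
  (forall x, x != y -> F x = 0) -> \sum_(x < d) F x = F y.
Proof.
move=> H; rewrite (bigD1 y) //= big1 ?addr0 // => x /H //.
Qed.

Definition pdL (R : realType) d (q : {perm 'I_d}) (s : 'I_d -> R) : 'M[R]_d :=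
  \matrix_(i, j) ((i == q j)%:R * s j).

Lemma pdL_stab (R : realType) d (q : {perm 'I_d}) (s : 'I_d -> R) :
  (forall i, s i * s i = 1) -> (forall i, (val i < 3)%N -> q i = i /\ s i = 1) ->
  (-1) ^+ (odd_perm q) * \prod_i s i = 1 -> in_stab_SO (pdL q s).
Proof.
move=> Hs Hfix Hdet; split.
- move=> a b Hab; rewrite mxE.
  have [Ha|Ha] := boolP (val a < 3)%N; last first.
    have Hb : (val b < 3)%N by move: Hab; rewrite (negbTE Ha).
    by have [-> ->] := Hfix b Hb; rewrite mulr1.
  have [Hqa _] := Hfix a Ha.
  have -> : (a == q b) = (a == b).
    by rewrite -{1}Hqa (inj_eq (@perm_inj _ q)).
  case: eqP => [<-|_]; last by rewrite mul0r.
  by have [_ ->] := Hfix a Ha; rewrite mulr1.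
- apply/matrixP => i j; rewrite !mxE.
  rewrite (sum_single (y:=q i)); last first.
    by move=> x xn; rewrite !mxE (negbTE xn) !mul0r.
  rewrite !mxE eqxx (inj_eq (@perm_inj _ q)) mul1r.
  case: eqP => [->|_]; first by rewrite mul1r Hs.
  by rewrite !mul0r mulr0.
- have -> : pdL q s = perm_mx q^-1 *m diag_mx (\row_j s j).
    apply/matrixP => i j; rewrite mul_mx_diag mxE perm_mxEsub !mxE.
    congr (_ * _); congr (_%:R).
    by rewrite -{1}(permKV q i) (inj_eq (@perm_inj _ q)).
  rewrite det_mulmx det_perm det_diag odd_permV -[RHS]Hdet; congr (_ * _).
  by apply: eq_bigr => i _; rewrite mxE.
Qed.

Lemma pd_inv (R : realType) d (C : frame_tensor R d) (q : {perm 'I_d}) (s : 'I_d -> R) :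
  invariant_under (pdL q s) C ->
  forall a b c e, C a b c e = s a * s b * s c * s e * C (q a) (q b) (q c) (q e).
Proof.
move=> H a b c e; rewrite H.
rewrite (sum_single (y:=q a)); last first.
  move=> x xn; do 3! (apply: big1 => ? _).
  by rewrite !mxE (negbTE xn) !mul0r.
rewrite (sum_single (y:=q b)); last first.
  move=> x xn; do 2! (apply: big1 => ? _).
  by rewrite !mxE (negbTE xn) !(mul0r, mulr0).
rewrite (sum_single (y:=q c)); last first.
  move=> x xn; do 1! (apply: big1 => ? _).
  by rewrite !mxE (negbTE xn) !(mul0r, mulr0).
rewrite (sum_single (y:=q e)); last first.
  by move=> x xn; rewrite !mxE (negbTE xn) !(mul0r, mulr0).
by rewrite !mxE !eqxx !mul1r.
Qed.

Definition invC (R : realType) d (C : frame_tensor R d) :=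
  forall L : 'M[R]_d, in_stab_SO L -> invariant_under L C.

Definition tr d (x : 'I_d) := (3 <= val x)%N.

Lemma ne_lt3 d (i x : 'I_d) : tr x -> (val i < 3)%N -> (i == x) = false.
Proof.
rewrite /tr => hx hi; apply/negbTE/eqP => E; move: hi; rewrite E.
by rewrite ltnNge hx.
Qed.

Definition sg2 (R : realType) d (x y i : 'I_d) : R :=
  if (i == x) || (i == y) then -1 else 1.
Arguments sg2 {R d}.

Lemma refl_inv (R : realType) d (C : frame_tensor R d) (x y : 'I_d) :
  invC C -> tr x -> tr y -> x != y ->
  forall a b c e, C a b c e = @sg2 R d x y a * @sg2 R d x y b * @sg2 R d x y c * @sg2 R d x y e * C a b c e.
Proof.
move=> HC hx hy xy a b c e.
have hst : in_stab_SO (pdL (1%g : {perm 'I_d}) (@sg2 R d x y)).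
  apply: pdL_stab.
  - by move=> i; rewrite /sg2; case: (_ || _); rewrite ?mulrNN mulr1.
  - by move=> i hi; rewrite perm1 /sg2 !ne_lt3.
  - rewrite odd_perm1 expr0 mul1r (bigD1 x) // (bigD1 y) /=; last by rewrite eq_sym.
    rewrite big1 ?mulr1.
      by rewrite /sg2 !eqxx orbT /= mulrNN mulr1.
    move=> i /andP [ix iy]; by rewrite /sg2 (negbTE ix) (negbTE iy).
by rewrite {1}(pd_inv (HC _ hst)) !perm1.
Qed.

Lemma kill (R : realType) d (C : frame_tensor R d) (x y : 'I_d) a b c e :
  invC C -> tr x -> tr y -> x != y ->
  @sg2 R d x y a * @sg2 R d x y b * @sg2 R d x y c * @sg2 R d x y e = -1 -> C a b c e = 0.
Proof.
move=> HC hx hy xy hs; have := refl_inv HC hx hy xy a b c e.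
rewrite hs mulN1r => /eqP; rewrite -subr_eq0 opprK -mulr2n.
by rewrite -mulr_natr mulf_eq0 pnatr_eq0 orbF => /eqP.
Qed.

Definition sg1 (R : realType) d (x i : 'I_d) : R := if i == x then -1 else 1.
Arguments sg1 {R d}.

Lemma swap_inv (R : realType) d (C : frame_tensor R d) (x y : 'I_d) :
  invC C -> tr x -> tr y -> x != y ->
  forall a b c e, C a b c e = @sg1 R d x a * @sg1 R d x b * @sg1 R d x c * @sg1 R d x e *
     C (tperm x y a) (tperm x y b) (tperm x y c) (tperm x y e).
Proof.
move=> HC hx hy xy a b c e.
have hst : in_stab_SO (pdL (tperm x y) (@sg1 R d x)).
  apply: pdL_stab.
  - by move=> i; rewrite /sg1; case: (_ == _); rewrite ?mulrNN mulr1.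
  - by move=> i hi; rewrite /sg1 ne_lt3 // tpermD // eq_sym ne_lt3.
  - rewrite odd_tperm xy expr1 (bigD1 x) //= big1 ?mulr1.
      by rewrite /sg1 eqxx /= mulrNN mulr1.
    by move=> i ix; rewrite /sg1 (negbTE ix).
exact: (pd_inv (HC _ hst)).
Qed.

Lemma cyc_inv (R : realType) d (C : frame_tensor R d) (x y z : 'I_d) :
  invC C -> tr x -> tr y -> tr z -> x != y -> y != z ->
  forall a b c e, C a b c e =
     C ((tperm x y * tperm y z)%g a) ((tperm x y * tperm y z)%g b)
       ((tperm x y * tperm y z)%g c) ((tperm x y * tperm y z)%g e).
Proof.
move=> HC hx hy hz xy yz a b c e.
have hst : in_stab_SO (pdL (tperm x y * tperm y z)%g (fun _ => (1:R))).
  apply: pdL_stab.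
  - by move=> i; rewrite mulr1.
  - by move=> i hi; rewrite permM !tpermD // eq_sym ne_lt3.
  - by rewrite odd_permM !odd_tperm xy yz /= expr0 mul1r big1.
by rewrite {1}(pd_inv (HC _ hst)) !mul1r.
Qed.


Definition TT d (hd : (5 < d)%N) (k : nat) (hk : (k < 6)%N) : 'I_d :=
  Ordinal (leq_trans hk hd).

Ltac dec := repeat match goal with
 | |- context [?u == ?u] => rewrite eqxx
 | H : is_true (?u != ?v) |- context [?u == ?v] => rewrite (negbTE H)
 | H : is_true (?v != ?u) |- context [?u == ?v] => rewrite (eq_sym u v) (negbTE H)
 | H : is_true (tr ?v) |- context [?u == ?v] => rewrite (ne_lt3 (i:=u) H); [|done]
 | H : is_true (tr ?u) |- context [?u == ?v] => rewrite (eq_sym u v) (ne_lt3 (i:=v) H); [|done]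
 end.

Lemma fresh d (hd : (5 < d)%N) (p q : 'I_d) : exists y : 'I_d, [/\ tr y, y != p & y != q].
Proof.
have h3 : tr (TT hd (isT : (3 < 6)%N)) by [].
have h4 : tr (TT hd (isT : (4 < 6)%N)) by [].
have h5 : tr (TT hd (isT : (5 < 6)%N)) by [].
case: (eqVneq (TT hd (isT : (3 < 6)%N)) p) => [e3|n3].
  case: (eqVneq (TT hd (isT : (4 < 6)%N)) q) => [e4|n4].
    exists (TT hd (isT : (5 < 6)%N)); split => //; [rewrite -e3|rewrite -e4]; by [].
  case: (eqVneq (TT hd (isT : (4 < 6)%N)) p) => [e4'|n4'].
    by move: e4'; rewrite -e3.
  by exists (TT hd (isT : (4 < 6)%N)).
case: (eqVneq (TT hd (isT : (3 < 6)%N)) q) => [e3|n3'].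
  case: (eqVneq (TT hd (isT : (4 < 6)%N)) p) => [e4|n4].
    exists (TT hd (isT : (5 < 6)%N)); split => //; [rewrite -e4|rewrite -e3]; by [].
  exists (TT hd (isT : (4 < 6)%N)); split => //; rewrite -e3; by [].
by exists (TT hd (isT : (3 < 6)%N)).
Qed.

Definition T2 d (hd : (5 < d)%N) : 'I_d := @TT d hd 2 isT.
Definition T3 d (hd : (5 < d)%N) : 'I_d := @TT d hd 3 isT.
Definition T4 d (hd : (5 < d)%N) : 'I_d := @TT d hd 4 isT.

Lemma trT3 d hd : tr (@T3 d hd). Proof. by []. Qed.
Lemma trT4 d hd : tr (@T4 d hd). Proof. by []. Qed.
Lemma T34 d hd : @T3 d hd != T4 hd. Proof. by []. Qed.

Ltac tp := repeat match goal with
 | |- context [@fun_of_perm ?T (@tperm _ ?x ?y) ?z] =>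
     first [ rewrite (@tpermL T x y) | rewrite (@tpermR T x y)
           | rewrite (@tpermD T x y z); [|by dec|by dec] ]
 end.




Lemma antiL (R : realType) d (C : frame_tensor R d) : is_weyl C ->
  forall a b c e, C a b c e = - C b a c e.
Proof. by case. Qed.
Lemma pairS (R : realType) d (C : frame_tensor R d) : is_weyl C ->
  forall a b c e, C a b c e = C c e a b.
Proof. by case. Qed.
Lemma antiR (R : realType) d (C : frame_tensor R d) : is_weyl C ->
  forall a b c e, C a b c e = - C a b e c.
Proof. by move=> HW a b c e; rewrite (pairS HW) (antiL HW) (pairS HW). Qed.
Lemma bian (R : realType) d (C : frame_tensor R d) : is_weyl C ->
  forall a b c e, C a b c e + C a c e b + C a e b c = 0.
Proof. by case. Qed.
Lemma zeroL (R : realType) d (C : frame_tensor R d) : is_weyl C ->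
  forall a c e, C a a c e = 0.
Proof.
move=> HW a c e; apply/eqP; have := antiL HW a a c e.
by move/eqP; rewrite -addr_eq0 -mulr2n -mulr_natr mulf_eq0 pnatr_eq0 orbF.
Qed.
Lemma zeroR (R : realType) d (C : frame_tensor R d) : is_weyl C ->
  forall a b c, C a b c c = 0.
Proof. by move=> HW a b c; rewrite (pairS HW) (zeroL HW). Qed.

Lemma sp_tr d hd (i : 'I_d) : spatial i -> i != T2 hd -> tr i.
Proof.
rewrite /spatial /tr => h2 hn; rewrite ltn_neqAle h2 andbT.
by apply: contra hn => /eqP e; apply/eqP/val_inj; rewrite /= -e.
Qed.

Ltac kill_tac HC x y := apply: (kill (x:=x) (y:=y) HC); [done|done|by dec|rewrite /sg2; dec; simpl; ring].

Lemma S2 (R : realType) d hd (C : frame_tensor R d) : is_weyl C -> invC C ->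
  forall x0 : 'I_d, (val x0 < 3)%N -> forall i j, spatial i -> spatial j ->
  C x0 i x0 j = C x0 (T3 hd) x0 (T3 hd) * kron i j +
     (C x0 (T2 hd) x0 (T2 hd) - C x0 (T3 hd) x0 (T3 hd)) * (kron i (T2 hd) * kron j (T2 hd)).
Proof.
move=> HW HC x0 hx i j si sj.
have h3 := trT3 hd.
case: (eqVneq i (T2 hd)) => [->|i2].
  case: (eqVneq j (T2 hd)) => [->|j2].
    rewrite /kron eqxx /=; ring.
  have hj := sp_tr sj j2.
  have [y [hy yj _]] := fresh hd j j.
  suff -> : C x0 (T2 hd) x0 j = 0 by rewrite /kron; dec; simpl; ring.
  kill_tac HC j y.
have hi := sp_tr si i2.
case: (eqVneq j (T2 hd)) => [->|j2].
  have [y [hy yi _]] := fresh hd i i.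
  suff -> : C x0 i x0 (T2 hd) = 0 by rewrite /kron; dec; simpl; ring.
  kill_tac HC i y.
have hj := sp_tr sj j2.
case: (eqVneq i j) => [<-|ij].
  suff -> : C x0 i x0 i = C x0 (T3 hd) x0 (T3 hd) by rewrite /kron; dec; simpl; ring.
  case: (eqVneq i (T3 hd)) => [->//|i3].
  rewrite (swap_inv HC h3 hi) 1?eq_sym //; tp.
  rewrite /sg1; dec; simpl; ring.
have [y [hy yi yj]] := fresh hd i j.
suff -> : C x0 i x0 j = 0 by rewrite /kron; dec; simpl; ring.
kill_tac HC i y.
Qed.

Lemma swap3 (R : realType) d hd (C : frame_tensor R d) : is_weyl C -> invC C ->
  forall x0 : 'I_d, (val x0 < 3)%N -> forall i, tr i ->
  C x0 i i (T2 hd) = C x0 (T3 hd) (T3 hd) (T2 hd).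
Proof.
move=> HW HC x0 hx i hi.
have h3 := trT3 hd.
case: (eqVneq i (T3 hd)) => [->//|i3].
rewrite (swap_inv HC h3 hi) 1?eq_sym //; tp.
rewrite /sg1; dec; simpl; ring.
Qed.

Lemma S3 (R : realType) d hd (C : frame_tensor R d) : is_weyl C -> invC C ->
  forall x0 : 'I_d, (val x0 < 3)%N -> forall i j k, spatial i -> spatial j -> spatial k ->
  C x0 i j k = C x0 (T3 hd) (T3 hd) (T2 hd) *
     (kron i j * kron k (T2 hd) - kron i k * kron j (T2 hd)).
Proof.
move=> HW HC x0 hx i j k si sj sk.
have h3 := trT3 hd.
case: (eqVneq i (T2 hd)) => [->|i2].
  case: (eqVneq j (T2 hd)) => [->|j2].
    case: (eqVneq k (T2 hd)) => [->|k2].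
      by rewrite (zeroR HW) /kron eqxx /=; ring.
    have hk := sp_tr sk k2.
    have [y [hy yk _]] := fresh hd k k.
    suff -> : C x0 (T2 hd) (T2 hd) k = 0 by rewrite /kron; dec; simpl; ring.
    kill_tac HC k y.
  have hj := sp_tr sj j2.
  case: (eqVneq k (T2 hd)) => [->|k2].
    have [y [hy yj _]] := fresh hd j j.
    suff -> : C x0 (T2 hd) j (T2 hd) = 0 by rewrite /kron; dec; simpl; ring.
    kill_tac HC j y.
  have hk := sp_tr sk k2.
  case: (eqVneq j k) => [<-|jk].
    by rewrite (zeroR HW) /kron; dec; simpl; ring.
  have [y [hy yj yk]] := fresh hd j k.
  suff -> : C x0 (T2 hd) j k = 0 by rewrite /kron; dec; simpl; ring.
  kill_tac HC j y.
have hi := sp_tr si i2.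
case: (eqVneq j (T2 hd)) => [->|j2].
  case: (eqVneq k (T2 hd)) => [->|k2].
    by rewrite (zeroR HW) /kron; dec; simpl; ring.
  have hk := sp_tr sk k2.
  case: (eqVneq i k) => [<-|ik].
    rewrite (antiR HW) (swap3 hd HW HC hx hi).
    rewrite /kron; dec; simpl; ring.
  have [y [hy yi yk]] := fresh hd i k.
  suff -> : C x0 i (T2 hd) k = 0 by rewrite /kron; dec; simpl; ring.
  kill_tac HC i y.
have hj := sp_tr sj j2.
case: (eqVneq k (T2 hd)) => [->|k2].
  case: (eqVneq i j) => [<-|ij].
    rewrite (swap3 hd HW HC hx hi).
    rewrite /kron; dec; simpl; ring.
  have [y [hy yi yj]] := fresh hd i j.
  suff -> : C x0 i j (T2 hd) = 0 by rewrite /kron; dec; simpl; ring.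
  kill_tac HC i y.
have hk := sp_tr sk k2.
case: (eqVneq j k) => [<-|jk].
  by rewrite (zeroR HW) /kron; dec; simpl; ring.
case: (eqVneq i j) => [eij|ij].
  subst j.
  have [y [hy yk yi]] := fresh hd k i.
  suff -> : C x0 i i k = 0 by rewrite /kron; dec; simpl; ring.
  kill_tac HC k y.
case: (eqVneq i k) => [<-|ik].
  have [y [hy yj yi]] := fresh hd j i.
  suff -> : C x0 i j i = 0 by rewrite /kron; dec; simpl; ring.
  kill_tac HC j y.
suff -> : C x0 i j k = 0 by rewrite /kron; dec; simpl; ring.
have e1 : C x0 i j k = C x0 k i j.
  by rewrite {1}(cyc_inv HC hi hj hk ij jk) !permM; tp.
have ki : k != i by rewrite eq_sym.
have e2 : C x0 k i j = C x0 j k i.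
  by rewrite {1}(cyc_inv HC hk hi hj ki ij) !permM; tp.
have := bian HW x0 i j k; lra.
Qed.

Lemma A0 (R : realType) d (hd : (5 < d)%N) (C : frame_tensor R d) : is_weyl C -> invC C ->
  forall a b : 'I_d, (val a < 3)%N -> (val b < 3)%N -> forall i j, spatial i -> spatial j ->
  C a b i j = 0.
Proof.
move=> HW HC a b ha hb i j si sj.
case: (eqVneq i j) => [<-|ij]; first by rewrite (zeroR HW).
case: (eqVneq i (T2 hd)) => [ei|i2].
  have j2 : j != T2 hd by rewrite -ei eq_sym.
  subst i.
  have hj := sp_tr sj j2.
  have [y [hy yj _]] := fresh hd j j.
  kill_tac HC j y.
have hi := sp_tr si i2.
have [y [hy yi yj]] := fresh hd i j.
kill_tac HC i y.
Qed.

Lemma stepR (R : realType) d (C : frame_tensor R d) : is_weyl C -> invC C ->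
  forall i j j', tr i -> tr j -> tr j' -> i != j -> i != j' -> C i j i j = C i j' i j'.
Proof.
move=> HW HC i j j' hi hj hj' ij ij'.
case: (eqVneq j j') => [->//|jj'].
rewrite {1}(swap_inv HC hj hj' jj'); tp.
rewrite /sg1; dec; simpl; ring.
Qed.

Lemma symm (R : realType) d (C : frame_tensor R d) : is_weyl C ->
  forall i j, C i j i j = C j i j i.
Proof. by move=> HW i j; rewrite (antiL HW) (antiR HW) opprK. Qed.

Lemma mu_l (R : realType) d hd (C : frame_tensor R d) : is_weyl C -> invC C ->
  forall i j, tr i -> tr j -> i != j -> C i j i j = C (T3 hd) (T4 hd) (T3 hd) (T4 hd).
Proof.
move=> HW HC i j hi hj ij.
have h3 := trT3 hd; have h4 := trT4 hd; have h34 := T34 hd.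
case: (eqVneq i (T4 hd)) => [ei|i4].
  subst i.
  rewrite (stepR HW HC (j':=T3 hd)) // 1?eq_sym // symm //.
rewrite (stepR HW HC (j':=T4 hd)) // symm // (stepR HW HC (j':=T3 hd)) // 1?eq_sym //.
exact: symm.
Qed.

Lemma S4t (R : realType) d hd (C : frame_tensor R d) : is_weyl C -> invC C ->
  forall i j k l, tr i -> tr j -> tr k -> tr l ->
  C i j k l = C (T3 hd) (T4 hd) (T3 hd) (T4 hd) *
    (kron i k * kron j l - kron i l * kron j k).
Proof.
move=> HW HC i j k l hi hj hk hl.
case: (eqVneq i j) => [<-|ij]; first by rewrite (zeroL HW); ring.
case: (eqVneq k l) => [<-|kl]; first by rewrite (zeroR HW); ring.
case: (eqVneq i k) => [ik|ik].
  subst k.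
  case: (eqVneq j l) => [jl|jl].
    subst l. rewrite (mu_l hd HW HC) // /kron; dec; simpl; ring.
  suff -> : C i j i l = 0 by rewrite /kron; dec; simpl; ring.
  have ji : j != i by rewrite eq_sym.
  kill_tac HC j i.
case: (eqVneq i l) => [il|il].
  subst l.
  case: (eqVneq j k) => [jk|jk].
    subst k. rewrite (antiR HW) (mu_l hd HW HC) // /kron; dec; simpl; ring.
  suff -> : C i j k i = 0 by rewrite /kron; dec; simpl; ring.
  have ji : j != i by rewrite eq_sym.
  kill_tac HC j i.
suff -> : C i j k l = 0 by rewrite /kron; dec; simpl; ring.
case: (eqVneq j k) => [jk|jk].
  subst k. kill_tac HC i j.
case: (eqVneq j l) => [jl|jl].
  subst l. kill_tac HC i j.
have e1 : C i j k l = C i l j k.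
  by rewrite {1}(cyc_inv HC hj hk hl jk kl) !permM; tp.
have lj : l != j by rewrite eq_sym.
have e2 : C i l j k = C i k l j.
  by rewrite {1}(cyc_inv HC hl hj hk lj jk) !permM; tp.
have := bian HW i j k l; lra.
Qed.

Definition form4 (R : realType) d (hd : (5 < d)%N) (mu nu : R) (i j k l : 'I_d) : R :=
 mu * (kron i k * kron j l - kron i l * kron j k) +
 nu * (kron i k * kron j (T2 hd) * kron l (T2 hd) - kron i l * kron j (T2 hd) * kron k (T2 hd)
       - kron j k * kron i (T2 hd) * kron l (T2 hd) + kron j l * kron i (T2 hd) * kron k (T2 hd)).

Lemma kronC (R : realType) d (i j : 'I_d) : kron i j = kron j i :> R.
Proof. by rewrite /kron eq_sym. Qed.

Lemma kronii (R : realType) d (i : 'I_d) : kron i i = 1 :> R.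
Proof. by rewrite /kron eqxx. Qed.
Arguments kronC {R d}. Arguments kronii {R d}.

Lemma f4_anti (R : realType) d hd (mu nu : R) (i j k l : 'I_d) :
  form4 hd mu nu i j k l = - form4 hd mu nu j i k l.
Proof. rewrite /form4; ring. Qed.

Lemma f4_pair (R : realType) d hd (mu nu : R) (i j k l : 'I_d) :
  form4 hd mu nu i j k l = form4 hd mu nu k l i j.
Proof. rewrite /form4 (kronC k i) (kronC l j) (kronC k j) (kronC l i); ring. Qed.

Definition muC (R : realType) d hd (C : frame_tensor R d) := C (T3 hd) (T4 hd) (T3 hd) (T4 hd).
Definition nuC (R : realType) d hd (C : frame_tensor R d) :=
  - C (T2 hd) (T3 hd) (T3 hd) (T2 hd) - muC hd C.

Lemma S4a (R : realType) d hd (C : frame_tensor R d) : is_weyl C -> invC C ->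
  forall j k l, spatial j -> spatial k -> spatial l ->
  C (T2 hd) j k l = form4 hd (muC hd C) (nuC hd C) (T2 hd) j k l.
Proof.
move=> HW HC j k l sj sk sl.
rewrite (S3 hd HW HC (x0 := T2 hd)) // /form4 /nuC /muC kronii (kronC (T2 hd) k) (kronC (T2 hd) l).
ring.
Qed.

Lemma S4 (R : realType) d hd (C : frame_tensor R d) : is_weyl C -> invC C ->
  forall i j k l, spatial i -> spatial j -> spatial k -> spatial l ->
  C i j k l = form4 hd (muC hd C) (nuC hd C) i j k l.
Proof.
move=> HW HC i j k l si sj sk sl.
case: (eqVneq i (T2 hd)) => [->|i2]; first exact: S4a.
case: (eqVneq j (T2 hd)) => [->|j2].
  by rewrite (antiL HW) (S4a hd HW HC) // (f4_anti hd _ _ i).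
case: (eqVneq k (T2 hd)) => [->|k2].
  by rewrite (pairS HW) (S4a hd HW HC) // (f4_pair hd _ _ i).
case: (eqVneq l (T2 hd)) => [->|l2].
  by rewrite (pairS HW) (antiL HW) (S4a hd HW HC) // (f4_anti hd _ _ (T2 hd)) opprK f4_pair.
have hi := sp_tr si i2; have hj := sp_tr sj j2.
have hk := sp_tr sk k2; have hl := sp_tr sl l2.
rewrite (S4t hd HW HC) // /form4 /muC /kron; dec; simpl; ring.
Qed.

Lemma sum_peel (R : realType) d (p : 'I_d) (G H : 'I_d -> R) : spatial p ->
  \sum_(k < d | spatial k) (kron k p * G k + H k) = G p + \sum_(k < d | spatial k) H k.
Proof.
move=> sp; rewrite big_split /=; congr (_ + _).
rewrite (bigD1 p) //= kronii mul1r big1 ?addr0 // => k /andP [_ kp].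
by rewrite /kron (negbTE kp) mul0r.
Qed.

Lemma sum_const (R : realType) d (hd : (5 < d)%N) (c : R) :
  \sum_(k < d | spatial k) c = c * Nr d.
Proof.
move: hd; case: d => [|[|d']] // _.
rewrite big_mkcond /= !big_ord_recl /=.
rewrite (eq_bigr (fun _ => c)); last by move=> i _.
rewrite sumr_const card_ord /Nr -mulr_natr !add0r.
rewrite ?mul1r -[d'.+2]addn2 natrD; ring.
Qed.

Lemma T2sp d hd : spatial (@T2 d hd). Proof. by []. Qed.

Lemma ricci (R : realType) d hd (C : frame_tensor R d) : is_weyl C -> invC C ->
  forall i j, spatial i -> spatial j ->
  Rbar_ij C i j = (muC hd C * (Nr d - 1) + nuC hd C) * kron i j +
                  nuC hd C * (Nr d - 2) * (kron i (T2 hd) * kron j (T2 hd)).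
Proof.
move=> HW HC i j si sj; rewrite /Rbar_ij.
set mu := muC hd C; set nu := nuC hd C; set t := T2 hd.
rewrite (eq_bigr (fun k => kron k j * (- mu * kron k i - nu * kron i t * kron k t)
   + (kron k i * (- nu * kron k t * kron j t) + (kron k t * (nu * kron i j * kron k t)
   + (mu * kron i j + nu * kron i t * kron j t))))); last first.
  move=> k sk; rewrite (S4 hd HW HC) // /form4 -/mu -/nu -/t !kronii (kronC i k); ring.
rewrite !sum_peel // ?T2sp // sum_const // kronii (kronC j i); ring.
Qed.

Lemma rbar (R : realType) d hd (C : frame_tensor R d) : is_weyl C -> invC C ->
  Rbar C = (muC hd C * (Nr d - 1) + nuC hd C) * Nr d + nuC hd C * (Nr d - 2).
Proof.
move=> HW HC; rewrite /Rbar.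
set mu := muC hd C; set nu := nuC hd C; set t := T2 hd.
rewrite (eq_bigr (fun k => kron k t * (nu * (Nr d - 2) * kron k t) + (mu * (Nr d - 1) + nu))); last first.
  move=> k sk; rewrite (ricci hd HW HC) // -/mu -/nu -/t !kronii; ring.
rewrite !sum_peel // ?T2sp // sum_const // kronii; ring.
Qed.

Definition T0 d (hd : (5 < d)%N) : 'I_d := @TT d hd 0 isT.
Definition T1 d (hd : (5 < d)%N) : 'I_d := @TT d hd 1 isT.

Definition partner d (hd : (5 < d)%N) (a : 'I_d) : 'I_d :=
  if val a == 0%N then T1 hd else if val a == 1%N then T0 hd else a.

Lemma etaP (R : realType) d hd (a c : 'I_d) : @Defs.eta R d a c = ((c == partner hd a)%:R : R).
Proof.
rewrite /Defs.eta /partner.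
case: a => [[|[|a]] ha]; case: c => [[|[|c]] hc] //=.
have -> : (1 < a.+2)%N by [].
by rewrite andbT eq_sym; case: (_ == _).
Qed.

Lemma eta_sum (R : realType) d hd (F : 'I_d -> 'I_d -> R) :
  \sum_(a < d) \sum_(c < d) @Defs.eta R d a c * F a c =
  F (T0 hd) (T1 hd) + F (T1 hd) (T0 hd) + \sum_(i < d | spatial i) F i i.
Proof.
rewrite (eq_bigr (fun a => F a (partner hd a))); last first.
  move=> a _; rewrite (sum_single (y:=partner hd a)).
    by rewrite etaP eqxx mul1r.
  by move=> c cn; rewrite etaP (negbTE cn) mul0r.
rewrite (bigD1 (T0 hd)) // (bigD1 (T1 hd)) //= -addrA; congr (_ + (_ + _)).
rewrite big_mkcond [RHS]big_mkcond; apply: eq_bigr => a _.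
by case: a => [[|[|a]] ha].
Qed.

Lemma trace0 (R : realType) d hd (C : frame_tensor R d) : is_weyl C ->
  forall x0, x0 = T0 hd \/ x0 = T1 hd ->
  \sum_(i < d | spatial i) C x0 i x0 i = 0.
Proof.
move=> HW x0 hx; have := HW; case=> _ _ _ /(_ x0 x0); rewrite eta_sum.
have -> : C (T0 hd) x0 (T1 hd) x0 + C (T1 hd) x0 (T0 hd) x0 = 0.
  by case: hx => ->; rewrite ?(zeroL HW) ?(zeroR HW) addr0.
rewrite add0r => H; rewrite -[RHS]H; apply: eq_bigr => i _; exact: symm.
Qed.

Lemma Nr_facts (R : realType) d (hd : (5 < d)%N) :
  [/\ Nr d != 0 :> R, Nr d - 1 != 0 :> R & Nr d - 2 != 0 :> R].
Proof.
have h6 : (6%:R <= d%:R :> R) by rewrite ler_nat.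
rewrite /Nr; split; apply/eqP; lra.
Qed.

Lemma kappaE (R : realType) d hd (i j : 'I_d) :
  kappa i j = Nr d * kron i (T2 hd) * kron j (T2 hd) - kron i j :> R.
Proof.
rewrite /kappa /Nr.
case: (eqVneq i (T2 hd)) => [->|i2].
  rewrite /= kronii (kronC (T2 hd) j); ring.
have -> : (val i == 2%N) = false.
  apply/negbTE; apply: contra i2 => /eqP e; apply/eqP/val_inj; rewrite e.
  by [].
by rewrite {2}/kron (negbTE i2) /=; ring.
Qed.

Lemma Hform (R : realType) d hd (C : frame_tensor R d) : is_weyl C -> invC C ->
  forall x0, x0 = T0 hd \/ x0 = T1 hd -> forall i j, spatial i -> spatial j ->
  Hcomp C x0 i j = - C x0 (T3 hd) x0 (T3 hd) * kappa i j.
Proof.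
move=> HW HC x0 hx i j si sj.
have hx3 : (val x0 < 3)%N by case: hx => ->.
have tr0 := trace0 HW hx.
rewrite (eq_bigr (fun k => kron k (T2 hd) * ((C x0 (T2 hd) x0 (T2 hd) - C x0 (T3 hd) x0 (T3 hd)) * kron k (T2 hd)) + C x0 (T3 hd) x0 (T3 hd))) in tr0; last first.
  move=> k sk; rewrite (S2 hd HW HC hx3) // kronii; ring.
rewrite sum_peel ?T2sp // sum_const // kronii in tr0.
rewrite /Hcomp (S2 hd HW HC hx3) // kappaE.
have eg : C x0 (T2 hd) x0 (T2 hd) - C x0 (T3 hd) x0 (T3 hd) = - C x0 (T3 hd) x0 (T3 hd) * Nr d.
  lra.
rewrite eg; ring.
Qed.

Lemma vform (R : realType) d hd (C : frame_tensor R d) : is_weyl C -> invC C ->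
  forall x0, (val x0 < 3)%N -> forall k, spatial k ->
  vcomp C x0 k = C x0 (T3 hd) (T3 hd) (T2 hd) * kron k (T2 hd).
Proof.
move=> HW HC x0 hx k sk; rewrite /vcomp.
set a := C x0 (T3 hd) (T3 hd) (T2 hd).
rewrite (eq_bigr (fun i => kron i k * (- a * kron i (T2 hd)) + a * kron k (T2 hd))); last first.
  move=> i si; rewrite (S3 hd HW HC hx) // -/a kronii (kronC k (T2 hd)); ring.
rewrite sum_peel // sum_const //.
have [_ h1 _] := Nr_facts R hd.
by field.
Qed.

Unset Implicit Arguments.

Theorem mainTheorem3 (R : realType) (d : nat) (hd : (5 < d)%N)
    (C : frame_tensor R d) :
  is_weyl C ->
  (forall L : 'M[R]_d, in_stab_SO L -> invariant_under L C) ->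
  let l := fidx hd 0 in
  let n := fidx hd 1 in
  exists lc lh vc vh s : R,
    (* check quantities *)
        (forall i j, spatial i -> spatial j -> Hcomp C n i j = lc * kappa i j) /\
        (forall i j k, spatial i -> spatial j -> spatial k -> Tcomp C n i j k = 0) /\
        (forall k, spatial k -> vcomp C n k = (val k == 2%N)%:R * vc) /\
        (* boost-weight zero quantities *)
        (forall i j, spatial i -> spatial j -> C l n i j = 0) /\
        (forall i j, spatial i -> spatial j -> Sbar C i j = s * kappa i j) /\
        (forall i j k m, spatial i -> spatial j -> spatial k -> spatial m ->
           Cbar C i j k m = 0) /\
        (* hat quantities *)
        (forall i j, spatial i -> spatial j -> Hcomp C l i j = lh * kappa i j) /\
        (forall i j k, spatial i -> spatial j -> spatial k -> Tcomp C l i j k = 0) /\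
        (forall k, spatial k -> vcomp C l k = (val k == 2%N)%:R * vh).
Proof.
move=> HW HC l n.
have HC' : invC C by [].
have el : l = T0 hd by apply: val_inj; rewrite /= /fidx val_insubd (ltn_trans _ hd).
have en : n = T1 hd by apply: val_inj; rewrite /= /fidx val_insubd (ltn_trans _ hd).
rewrite el en; clear l n el en.
have [hN hN1 hN2] := Nr_facts R hd.
have k2 : forall k : 'I_d, (val k == 2%N)%:R = kron k (T2 hd) :> R by [].
have Tz : forall x0 : 'I_d, (val x0 < 3)%N -> forall i j k, spatial i -> spatial j -> spatial k ->
    Tcomp C x0 i j k = 0.
  move=> x0 hx i j k si sj sk.
  rewrite /Tcomp (S3 hd HW HC' hx) // !(vform hd HW HC' hx) //; ring.
exists (- C (T1 hd) (T3 hd) (T1 hd) (T3 hd)), (- C (T0 hd) (T3 hd) (T0 hd) (T3 hd)),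
  (C (T1 hd) (T3 hd) (T3 hd) (T2 hd)), (C (T0 hd) (T3 hd) (T3 hd) (T2 hd)),
  (nuC hd C * (Nr d - 2) / Nr d).
split; first by move=> i j si sj; rewrite (Hform (hd:=hd) HW HC' (or_intror erefl)).
split; first by move=> i j k si sj sk; apply: Tz.
split; first by move=> k sk; rewrite k2 (vform hd HW HC') // mulrC.
split; first by move=> i j si sj; apply: (A0 hd HW HC').
split.
  move=> i j si sj; rewrite /Sbar (ricci hd HW HC') // (rbar hd HW HC') kappaE.
  by field.
split.
  move=> i j k m si sj sk sm; rewrite /Cbar (S4 hd HW HC') // !(ricci hd HW HC') //.
  rewrite (rbar hd HW HC') /form4; field.
  by rewrite hN1 hN2.
split; first by move=> i j si sj; rewrite (Hform (hd:=hd) HW HC' (or_introl erefl)).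
split; first by move=> i j k si sj sk; apply: Tz.
by move=> k sk; rewrite k2 (vform hd HW HC') // mulrC.
Qed.
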